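(* Let $T$ be a pre-truss and let $P$ be a non-empty normal sub-heap of $T$. Let $\pi:T\to T/P$ be the canonical heap epimorphism onto the quotient heap by the sub-heap relation $\sim_P$. Then $\pi$ is a homomorphism of pre-trusses (that is, $\sim_P$ is compatible with the multiplication of $T$, so that $T/P$ carries an associative multiplication $\pi(a)\pi(b)=\pi(ab)$ making $\pi$ a pre-truss homomorphism) if and only if $P$ is a paragon.
   Context: A heap is a set $H$ with a ternary operation $[-,-,-]$ such that $[a_1,a_2,[a_3,a_4,a_5]]=[[a_1,a_2,a_3],a_4,a_5]$ and $[a,a,b]=b=[b,a,a]$ for all elements. A sub-heap is a subset closed under $[-,-,-]$. A normal sub-heap is a non-empty sub-heap $S$ such that $[[a,e,s],a,e]\in S$ for all $a\in H$, $e,s\in S$. For a non-empty sub-heap $S$, the relation $a\sim_S b$ holds iff there exists $s\in S$ with $[a,b,s]\in S$ (equivalently, for all $s\in S$); it is an equivalence relation, and for normal $S$ it is a heap congruence, giving the quotient heap $H/S$ and the canonical heap epimorphism $\pi$. A pre-truss is a heap $T$ together with an associative binary operation (written by juxtaposition); a homomorphism of pre-trusses is a map that is both a heap homomorphism and a semigroup homomorphism. A sub-heap $S$ of a pre-truss $T$ is left-closed if $[ts',ts,s]\in S$ for all $s,s'\in S$, $t\in T$; right-closed if $[s't,st,s]\in S$ for all $s,s'\in S$, $t\in T$; closed if both. A paragon is a non-empty normal sub-heap $P$ of $T$ such that every equivalence class of $\sim_P$ is a closed sub-heap of $T$. *)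

(* Defs.v *)
From Stdlib Require Import ClassicalEpsilon.
Set Implicit Arguments.

Section Defs.
Variable T : Type.
Variable h : T -> T -> T -> T.
Variable mul : T -> T -> T.

Definition is_heap : Prop :=
  (forall a1 a2 a3 a4 a5, h a1 a2 (h a3 a4 a5) = h (h a1 a2 a3) a4 a5) /\
  (forall a b, h a a b = b /\ h b a a = b).

Definition associative_op (m : T -> T -> T) : Prop :=
  forall a b c, m a (m b c) = m (m a b) c.

Definition is_pretruss : Prop := is_heap /\ associative_op mul.

Definition subheap (S : T -> Prop) : Prop :=
  forall a b c, S a -> S b -> S c -> S (h a b c).

Definition normal_subheap (S : T -> Prop) : Prop :=
  (exists s, S s) /\ subheap S /\
  (forall a e s, S e -> S s -> S (h (h a e s) a e)).

Definition simS (S : T -> Prop) (a b : T) : Prop :=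
  exists s, S s /\ S (h a b s).

Definition left_closed (S : T -> Prop) : Prop :=
  forall s s' t, S s -> S s' -> S (h (mul t s') (mul t s) s).
Definition right_closed (S : T -> Prop) : Prop :=
  forall s s' t, S s -> S s' -> S (h (mul s' t) (mul s t) s).
Definition closed_subheap (S : T -> Prop) : Prop :=
  subheap S /\ left_closed S /\ right_closed S.

Definition paragon (P : T -> Prop) : Prop :=
  normal_subheap P /\ forall a, closed_subheap (simS P a).

Definition quot (S : T -> Prop) : Type :=
  { C : T -> Prop | exists a, C = simS S a }.

Definition proj (S : T -> Prop) (a : T) : quot S :=
  exist _ (simS S a) (ex_intro _ a eq_refl).

Definition repr (S : T -> Prop) (X : quot S) : T :=
  proj1_sig (constructive_indefinite_description _ (proj2_sig X)).

(* Heap operation of the quotient heap T/S (well defined for S normal). *)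
Definition qheap (S : T -> Prop) (X Y Z : quot S) : quot S :=
  proj S (h (repr X) (repr Y) (repr Z)).

End Defs.

Definition pretruss_hom (T U : Type) (h : T -> T -> T -> T) (m : T -> T -> T)
  (k : U -> U -> U -> U) (n : U -> U -> U) (f : T -> U) : Prop :=
  (forall a b c, f (h a b c) = k (f a) (f b) (f c)) /\
  (forall a b, f (m a b) = n (f a) (f b)).

(* Main.v *)
Require Import Defs.
From Stdlib Require Import ClassicalEpsilon ProofIrrelevance FunctionalExtensionality PropExtensionality.

Lemma hA {T} {h : T -> T -> T -> T} (HH : is_heap h) a b c d e :
  h a b (h c d e) = h (h a b c) d e.
Proof. apply (proj1 HH). Qed.
Lemma hK1 {T} {h : T -> T -> T -> T} (HH : is_heap h) a b : h a a b = b.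
Proof. apply (proj2 HH). Qed.
Lemma hK2 {T} {h : T -> T -> T -> T} (HH : is_heap h) a b : h b a a = b.
Proof. apply (proj2 HH). Qed.

Lemma hM {T} {h : T -> T -> T -> T} (HH : is_heap h) a b c d e :
  h (h a b c) d e = h a (h d c b) e.
Proof.
  transitivity (h (h a b c) d (h (h d c b) (h d c b) e)).
  { rewrite (hK1 HH). reflexivity. }
  rewrite (hA HH). f_equal.
  rewrite (hA HH (h a b c) d d c b). rewrite (hK2 HH).
  rewrite <- (hA HH a b c c b). rewrite (hK1 HH). apply (hK2 HH).
Qed.

Section S.
Context {T : Type} {h : T -> T -> T -> T} (HH : is_heap h) {P : T -> Prop}
  (HP : normal_subheap h P).

Local Notation sim := (simS h P).

Lemma sim_all a b s : sim a b -> P s -> P (h a b s).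
Proof.
  intros [s0 [Hs0 H]] Hs.
  replace (h a b s) with (h (h a b s0) s0 s).
  - apply (proj1 (proj2 HP)); auto.
  - rewrite <- (hA HH). rewrite (hK1 HH). reflexivity.
Qed.

Lemma someP : exists s, P s.
Proof. apply (proj1 HP). Qed.

Lemma sim_refl a : sim a a.
Proof. destruct someP as [s Hs]. exists s. rewrite (hK1 HH). auto. Qed.

Lemma sim_sym a b : sim a b -> sim b a.
Proof.
  intros [s [Hs H]]. exists s; split; auto.
  replace (h b a s) with (h s (h a b s) s).
  - apply (proj1 (proj2 HP)); auto.
  - rewrite <- (hM HH). rewrite (hK1 HH). reflexivity.
Qed.

Lemma sim_trans a b c : sim a b -> sim b c -> sim a c.
Proof.
  intros H1 H2. destruct someP as [s Hs]. exists s; split; auto.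
  replace (h a c s) with (h (h a b s) s (h b c s)).
  - apply (proj1 (proj2 HP)); auto using sim_all.
  - rewrite <- (hA HH). rewrite (hK1 HH). rewrite (hA HH). rewrite (hK2 HH). reflexivity.
Qed.

Lemma cong1 a a' b c : sim a a' -> sim (h a b c) (h a' b c).
Proof.
  intros H. destruct someP as [s Hs]. exists s; split; auto.
  replace (h (h a b c) (h a' b c) s) with (h a a' s) by
   (rewrite <- (hA HH a b c); rewrite <- (hM HH c c b a' s); rewrite (hK1 HH);
    rewrite (hA HH); rewrite (hK2 HH); reflexivity).
  apply sim_all; auto.
Qed.

Lemma cong3 a b c c' : sim c c' -> sim (h a b c) (h a b c').
Proof.
  intros H. destruct someP as [s Hs]. exists s; split; auto.
  assert (E1 : h (h a b c) (h a b c') s = h a b (h c c' (h b a s))).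
  { rewrite (hM HH a b c (h a b c') s).
    rewrite <- (hA HH a b c' c b).
    rewrite <- (hM HH a (h c' c b) b a s).
    rewrite <- (hM HH a b c c' b).
    rewrite <- (hA HH (h a b c) c' b a s).
    rewrite <- (hA HH a b c c' (h b a s)). reflexivity. }
  assert (E2 : h (h (h a b s) s (h c c' s)) (h a b s) s = h a b (h c c' (h b a s))).
  { rewrite <- (hA HH (h a b s) s (h c c' s)).
    rewrite <- (hA HH a b s s _). rewrite (hK1 HH).
    rewrite <- (hA HH c c' s (h a b s) s).
    rewrite <- (hM HH s s b a s). rewrite (hK1 HH). reflexivity. }
  rewrite E1, <- E2. apply (proj2 (proj2 HP)); auto.
  apply sim_all; auto.
Qed.

Lemma cong2 a b b' c : sim b b' -> sim (h a b c) (h a b' c).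
Proof.
  intros H.
  replace (h a b c) with (h (h a b b') b' c) by
    (rewrite <- (hA HH); rewrite (hK1 HH); reflexivity).
  apply cong1. assert (Q : sim (h a b b') (h a b b)) by (apply cong3; apply sim_sym; auto).
  rewrite (hK2 HH) in Q. exact Q.
Qed.

Lemma cong a a' b b' c c' : sim a a' -> sim b b' -> sim c c' ->
  sim (h a b c) (h a' b' c').
Proof.
  intros H1 H2 H3.
  apply sim_trans with (h a' b c); [apply cong1; auto|].
  apply sim_trans with (h a' b' c); [apply cong2; auto|].
  apply cong3; auto.
Qed.

Lemma sig_eq' (A : Type) (Q : A -> Prop) (x y : {a | Q a}) :
  proj1_sig x = proj1_sig y -> x = y.
Proof.
  destruct x as [x px], y as [y py]; simpl; intros ->. f_equal. apply proof_irrelevance.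
Qed.

Lemma sim_proj a b : sim a b -> proj h P a = proj h P b.
Proof.
  intros H. apply sig_eq'. simpl. extensionality x. apply propositional_extensionality.
  split; intros Hx.
  - apply sim_trans with a; auto. apply sim_sym; auto.
  - apply sim_trans with b; auto.
Qed.

Lemma proj_sim a b : proj h P a = proj h P b -> sim a b.
Proof.
  intros E. apply (f_equal (@proj1_sig _ _)) in E. simpl in E.
  assert (Hb : sim b b) by apply sim_refl.
  rewrite <- E in Hb. exact Hb.
Qed.

Lemma proj_repr (X : quot h P) : proj h P (repr X) = X.
Proof.
  apply sig_eq'. simpl. unfold repr.
  destruct (constructive_indefinite_description _ (proj2_sig X)) as [x Hx]. simpl.
  symmetry; exact Hx.
Qed.

Lemma repr_sim a : sim (repr (proj h P a)) a.
Proof. apply proj_sim. apply proj_repr. Qed.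

End S.

Theorem theorem3p14 (T : Type) (h : T -> T -> T -> T) (mul : T -> T -> T)
  (HT : is_pretruss h mul) (P : T -> Prop) (HP : normal_subheap h P) :
  (exists qmul : quot h P -> quot h P -> quot h P,
      associative_op qmul /\
      pretruss_hom h mul (@qheap T h P) qmul (@proj T h P))
  <-> paragon h mul P.
Proof.
  destruct HT as [HH Hass].
  split.
  - intros [qmul [Hq [H1 H2]]].
    assert (MC : forall x x' y y', simS h P x x' -> simS h P y y' ->
              simS h P (mul x y) (mul x' y')).
    { intros x x' y y' Hx Hy. apply (proj_sim HH HP).
      rewrite !H2. rewrite (sim_proj HH HP _ _ Hx), (sim_proj HH HP _ _ Hy). reflexivity. }
    split; auto. intros a. split; [|split].
    + intros x y z Hx Hy Hz. rewrite <- (hK1 HH a a).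
      apply (cong HH HP); auto.
    + intros s s' t Hs Hs'.
      apply (sim_trans HH HP) with s; auto.
      apply (sim_sym HH HP).
      assert (Q : forall u v, simS h P u v -> simS h P (h u (mul t s) s) (h v (mul t s) s)).
      { intros u v Huv. apply (cong HH HP); auto; apply (sim_refl HH HP). }
      assert (E : h (mul t s) (mul t s) s = s) by apply (hK1 HH).
      eapply (sim_trans HH HP); [apply Q|rewrite E; apply (sim_refl HH HP)].
      apply MC; [apply (sim_refl HH HP)|].
      apply (sim_trans HH HP) with a; auto. apply (sim_sym HH HP); auto.
    + intros s s' t Hs Hs'.
      apply (sim_trans HH HP) with s; auto.
      apply (sim_sym HH HP).
      assert (Q : forall u v, simS h P u v -> simS h P (h u (mul s t) s) (h v (mul s t) s)).
      { intros u v Huv. apply (cong HH HP); auto; apply (sim_refl HH HP). }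
      assert (E : h (mul s t) (mul s t) s = s) by apply (hK1 HH).
      eapply (sim_trans HH HP); [apply Q|rewrite E; apply (sim_refl HH HP)].
      apply MC; [|apply (sim_refl HH HP)].
      apply (sim_trans HH HP) with a; auto. apply (sim_sym HH HP); auto.
  - intros [_ HC].
    assert (L : forall a b b', simS h P b b' -> simS h P (mul a b) (mul a b')).
    { intros a b b' Hb. destruct (HC b) as [_ [Hl _]].
      specialize (Hl b b' a (sim_refl HH HP b) Hb).
      apply (sim_sym HH HP) in Hl.
      destruct (someP HP) as [s Hs].
      apply (sim_sym HH HP). exists s; split; auto.
      pose proof (sim_all HH HP _ _ s Hl Hs) as Q.
      rewrite <- (hA HH), (hK1 HH) in Q. exact Q. }
    assert (R : forall a a' b, simS h P a a' -> simS h P (mul a b) (mul a' b)).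
    { intros a a' b Ha. destruct (HC a) as [_ [_ Hr]].
      specialize (Hr a a' b (sim_refl HH HP a) Ha).
      apply (sim_sym HH HP) in Hr.
      destruct (someP HP) as [s Hs].
      apply (sim_sym HH HP). exists s; split; auto.
      pose proof (sim_all HH HP _ _ s Hr Hs) as Q.
      rewrite <- (hA HH), (hK1 HH) in Q. exact Q. }
    assert (MC : forall x x' y y', simS h P x x' -> simS h P y y' ->
              simS h P (mul x y) (mul x' y')).
    { intros. apply (sim_trans HH HP) with (mul x' y); auto. }
    exists (fun X Y => proj h P (mul (repr X) (repr Y))).
    split; [|split].
    + intros X Y Z. apply (sim_proj HH HP).
      apply (sim_trans HH HP) with (mul (repr X) (mul (repr Y) (repr Z))).
      { apply MC; [apply (sim_refl HH HP)|]. apply (repr_sim HH HP). }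
      rewrite Hass. apply MC; [|apply (sim_refl HH HP)].
      apply (sim_sym HH HP); apply (repr_sim HH HP).
    + intros a b c. unfold qheap. apply (sim_proj HH HP).
      apply (cong HH HP); apply (sim_sym HH HP); apply (repr_sim HH HP).
    + intros a b. apply (sim_proj HH HP).
      apply MC; apply (sim_sym HH HP); apply (repr_sim HH HP).
Qed.
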